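(* Let $A$ be a unital algebra over a field $F$ with $\operatorname{char}(F)\neq2$, and let $\mathcal{A}=M_n(A)$, $n\ge 2$, be the algebra of $n\times n$ matrices over $A$. Then $\operatorname{QJCent}(\mathcal{A})=\operatorname{Cent}(\mathcal{A})$.
   Context: $x\circ y=xy+yx$. $\operatorname{QJCent}(\mathcal{A})$: linear $f:\mathcal{A}\to\mathcal{A}$ with $f(x)\circ y=x\circ f(y)$ for all $x,y\in\mathcal{A}$. $\operatorname{Cent}(\mathcal{A})$: linear $f$ with $f(xy)=f(x)y=xf(y)$ for all $x,y$. *)

(* Defs.v *)
From mathcomp Require Import all_boot all_algebra.
Set Implicit Arguments. Unset Strict Implicit. Unset Printing Implicit Defensive.
Import GRing.Theory.
Local Open Scope ring_scope.

Definition scalemxF (F : fieldType) (A : algType F) (n : nat) (c : F)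
  (X : 'M[A]_n) : 'M[A]_n := map_mx (fun a => c *: a) X.

Definition F_linear (F : fieldType) (A : algType F) (n : nat)
  (f : 'M[A]_n -> 'M[A]_n) : Prop :=
  (forall X Y, f (X + Y) = f X + f Y) /\
  (forall (c : F) X, f (scalemxF c X) = scalemxF c (f X)).

Definition jprod (F : fieldType) (A : algType F) (n : nat) (X Y : 'M[A]_n) :
  'M[A]_n := X *m Y + Y *m X.

Definition QJCent (F : fieldType) (A : algType F) (n : nat)
  (f : 'M[A]_n -> 'M[A]_n) : Prop :=
  F_linear f /\ forall X Y, jprod (f X) Y = jprod X (f Y).

Definition Cent (F : fieldType) (A : algType F) (n : nat)
  (f : 'M[A]_n -> 'M[A]_n) : Prop :=
  F_linear f /\ forall X Y, f (X *m Y) = f X *m Y /\ f (X *m Y) = X *m f Y.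

(* Main.v *)
Require Import Defs.
From mathcomp Require Import all_boot all_algebra.
Local Open Scope ring_scope.
Import GRing.Theory.

Lemma cancel4 (V : zmodType) (p q r s u v : V) : p + q + r + s = u + p + s + v -> q + r = u + v.
Proof.
move=> h. apply: (addrI (p + s)).
have e1 : p + s + (q + r) = p + q + r + s.
  by rewrite -!addrA; congr (_ + _); rewrite addrC -addrA.
have e2 : p + s + (u + v) = u + p + s + v.
  by rewrite (addrC u p) !addrA (addrAC p s u).
by rewrite e1 e2.
Qed.

Definition Emx {A : nzRingType} {m : nat} (a : A) (i j : 'I_m) : 'M[A]_m :=
  \matrix_(k, l) (if (k == i) && (l == j) then a else 0).

Lemma mulE_l (A : nzRingType) (m : nat) (a : A) (i j : 'I_m) (M : 'M[A]_m) k l :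
  (Emx a i j *m M) k l = if k == i then a * M j l else 0.
Proof.
rewrite mxE (bigD1 j) //= big1 => [|x hx]; rewrite !mxE.
  by rewrite eqxx andbT addr0; case: (k == i) => //; rewrite mul0r.
by rewrite (negbTE hx) andbF mul0r.
Qed.

Lemma mulE_r (A : nzRingType) (m : nat) (a : A) (i j : 'I_m) (M : 'M[A]_m) k l :
  (M *m Emx a i j) k l = if l == j then M k i * a else 0.
Proof.
rewrite mxE (bigD1 i) //= big1 => [|x hx]; rewrite !mxE.
  by rewrite eqxx /= addr0; case: (l == j) => //; rewrite mulr0.
by rewrite (negbTE hx) /= mulr0.
Qed.

Lemma two_cancel (F : fieldType) (A : algType F) (m : nat) (hchar : (2%:R : F) != 0)
  (D : 'M[A]_m) : D + D = 0 -> D = 0.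
Proof.
move=> hD; apply/matrixP => k l.
have hk := congr1 (fun M : 'M[A]_m => M k l) hD; rewrite /= !mxE in hk.
rewrite mxE.
have -> : D k l = (2%:R^-1 : F) *: ((2%:R : F) *: D k l).
  by rewrite scalerA mulVf // scale1r.
by rewrite scaler_nat [D k l *+ 2]mulr2n hk scaler0.
Qed.

Theorem proposition3p4 (F : fieldType) (A : algType F) (n : nat)
  (hn : (2 <= n)%N) (hchar : (2%:R : F) != 0) :
  forall f : 'M[A]_n -> 'M[A]_n, QJCent f <-> Cent f.
Proof.
case: n hn => [|[|n]] // _ f; split; last first.
  case=> lin H; split => // X Y; rewrite /jprod.
  rewrite -(proj1 (H X Y)) -(proj2 (H Y X)) (proj2 (H X Y)) (proj1 (H Y X)).
  done.
case=> lin H; rewrite /jprod in H.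
set T := f 1%:M.
have hT X : f X + f X = X *m T + T *m X.
  by have := H X 1%:M; rewrite mulmx1 mul1mx.
have comm X Y : T *m (X *m Y) + (Y *m X) *m T = (X *m Y) *m T + T *m (Y *m X).
  have : (f X + f X) *m Y + Y *m (f X + f X) = X *m (f Y + f Y) + (f Y + f Y) *m X.
    by rewrite !mulmxDl !mulmxDr addrACA (H X Y) addrACA.
  rewrite !hT.
  rewrite !mulmxDl !mulmxDr !mulmxA !addrA => h.
  exact: cancel4 h.
have TE a (i j : 'I_n.+2) : i != j -> T *m Emx a i j = Emx a i j *m T.
  move=> hij.
  have e1 : Emx a i i *m Emx 1 i j = Emx a i j.
    apply/matrixP => k l; rewrite mulE_l !mxE eqxx /=.
    by case: (k == i); case: (l == j); rewrite ?mulr1 ?mulr0.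
  have e2 : Emx 1 i j *m Emx a i i = 0.
    apply/matrixP => k l; rewrite mulE_l !mxE (eq_sym j i) (negbTE hij) /=.
    by case: (k == i); rewrite ?mulr0.
  have := comm (Emx a i i) (Emx 1 i j).
  by rewrite e1 e2 mul0mx mulmx0 !addr0.
have offd (k i : 'I_n.+2) : k != i -> T k i = 0.
  move=> hki.
  have hik : i != k by rewrite eq_sym.
  have := congr1 (fun M : 'M[A]_n.+2 => M k k) (TE 1 i k hik).
  by rewrite /= mulE_r mulE_l eqxx (negbTE hki) mulr1.
have diag (i j : 'I_n.+2) (a : A) : i != j -> T i i * a = a * T j j.
  move=> hij.
  have := congr1 (fun M : 'M[A]_n.+2 => M i j) (TE a i j hij).
  by rewrite /= mulE_r mulE_l !eqxx.
have other (k : 'I_n.+2) : exists j, j != k.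
  case: (eqVneq k ord0) => [->|hk]; last by exists ord0; rewrite eq_sym.
  by exists (lift ord0 ord0).
have diag' (k l : 'I_n.+2) (a : A) : T k k * a = a * T l l.
  case: (eqVneq k l) => [<-|]; last exact: diag.
  have [j hj] := other k.
  have hkj : k != j by rewrite eq_sym.
  have h1 := diag k j 1 hkj; rewrite mulr1 mul1r in h1.
  by rewrite (diag k j a hkj) -h1.
have Tc X : T *m X = X *m T.
  apply/matrixP => k l; rewrite !mxE (bigD1 k) //= big1 => [|m hm]; last first.
    by rewrite offd ?mul0r // eq_sym.
  rewrite (bigD1 l) //= big1 => [|m hm]; last by rewrite offd ?mulr0.
  by rewrite !addr0 (diag' k l).
have fE X : f X = T *m X.
  have h := hT X; rewrite -Tc in h.
  apply/eqP; rewrite -subr_eq0; apply/eqP.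
  have hD : (f X - T *m X) + (f X - T *m X) = 0 by rewrite addrACA -opprD h subrr.
  exact: (@two_cancel F A _ hchar _ hD).
split=> // X Y; rewrite !fE; split; first by rewrite mulmxA.
by rewrite !mulmxA Tc.
Qed.
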